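(* For every $n\ge1$, $$\det\widehat M=(-1)^{\frac{n(n-1)}2}\,2^{n^2+n+1}\,(2n+15)\,\frac{(n+6)!}{6!},$$ in particular $\det\widehat M\neq0$.
   Context: Let $\mathcal E=\{\emptyset\}\cup\{1,\dots,n\}\cup\{\{p,q\}:1\le p<q\le n\}$ (pair indices written with $p<q$). $\widehat M$ is the $\mathcal E\times\mathcal E$ rational matrix with entries $\widehat M_{\rho,\sigma}$, $\rho$ row, $\sigma$ column: Row $\emptyset$: $\widehat M_{\emptyset,\emptyset}=5(n+6)$, $\widehat M_{\emptyset,p}=5n+34$, $\widehat M_{\emptyset,\{p,q\}}=5(n+6)$. Row $k$: $\widehat M_{k,\emptyset}=7$; $\widehat M_{k,p}=35$ if $p=k$, $7$ if $p\neq k$; $\widehat M_{k,\{p,q\}}=3$ if $k=p$, $35$ if $k=q$, $7$ if $k\notin\{p,q\}$. Row $\{k,l\}$: $\widehat M_{\{k,l\},\emptyset}=5$; $\widehat M_{\{k,l\},p}=15$ if $p\in\{k,l\}$, $5$ otherwise; $\widehat M_{\{k,l\},\{p,q\}}=9$ if $\{k,l\}=\{p,q\}$, $3$ if $\{k,l\}\cap\{p,q\}=\{p\}$, $15$ if $\{k,l\}\cap\{p,q\}=\{q\}$, $5$ if disjoint. *)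

(* Defs.v *)
From HB Require Import structures.
From mathcomp Require Import all_boot all_order all_algebra.
Set Implicit Arguments. Unset Strict Implicit. Unset Printing Implicit Defensive.
Import Order.TTheory GRing.Theory Num.Theory.
Local Open Scope ring_scope.

(* Index set E = {emptyset} ∪ {1..n} ∪ {{p,q} : 1 <= p < q <= n}.
   Singletons p ∈ {1..n} are encoded by i : 'I_n with p = i+1 (order preserved);
   pairs {p,q} with p<q by (i,j) : 'I_n * 'I_n with i < j. *)
Definition pairE (n : nat) := {pq : 'I_n * 'I_n | (pq.1 < pq.2)%N}.
Definition idxE (n : nat) : finType := option ('I_n + pairE n)%type.

Definition Mentry (n : nat) (r c : idxE n) : rat :=
  match r, c with
  | None, None => (5 * (n + 6))%:R
  | None, Some (inl _) => (5 * n + 34)%:R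
  | None, Some (inr _) => (5 * (n + 6))%:R
  | Some (inl _), None => 7
  | Some (inl k), Some (inl p) => if k == p then 35 else 7
  | Some (inl k), Some (inr pq) =>
      let p := (val pq).1 in let q := (val pq).2 in
      if k == p then 3 else if k == q then 35 else 7
  | Some (inr _), None => 5
  | Some (inr kl), Some (inl p) =>
      let k := (val kl).1 in let l := (val kl).2 in
      if (p == k) || (p == l) then 15 else 5
  | Some (inr kl), Some (inr pq) =>
      let k := (val kl).1 in let l := (val kl).2 in
      let p := (val pq).1 in let q := (val pq).2 in
      let pin := (p == k) || (p == l) in
      let qin := (q == k) || (q == l) in
      if pin && qin then 9
      else if pin then 3
      else if qin then 15
      else 5
  end.

(* The matrix \widehat M, written in the library's 'M_(#|E|) type by
   enumerating E (the determinant does not depend on the enumeration order,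
   since rows and columns use the same one). *)
Definition Mhat (n : nat) : 'M[rat]_#|idxE n| :=
  \matrix_(i, j) Mentry (enum_val i) (enum_val j).

(* Main.v *)
Require Import Defs.
From HB Require Import structures.
From mathcomp Require Import all_boot all_order all_algebra.
From mathcomp Require Import fingroup perm zify ring lra.
Set Implicit Arguments. Unset Strict Implicit. Unset Printing Implicit Defensive.
Import Order.TTheory GRing.Theory Num.Theory.
Local Open Scope ring_scope.

Lemma sum_opt (T : finType) (F : option T -> rat) :
  \sum_x F x = F None + \sum_x F (Some x).
Proof.
rewrite (bigD1 None) //=; congr (_ + _).
rewrite (reindex_omap Some (fun x => x)); last by move=> [x|].
by apply: eq_bigl => x /=; rewrite eqxx.
Qed.

Lemma prod_opt (T : finType) (F : option T -> rat) :
  \prod_x F x = F None * \prod_x F (Some x).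
Proof.
rewrite (bigD1 None) //=; congr (_ * _).
rewrite (reindex_omap Some (fun x => x)); last by move=> [x|].
by apply: eq_bigl => x /=; rewrite eqxx.
Qed.

Lemma sum_delta (T : finType) (F : T -> rat) a :
  \sum_y F y * (y == a)%:R = F a.
Proof.
rewrite (bigD1 a) //= eqxx mulr1 big1 ?addr0 // => y /negbTE ->; by rewrite mulr0.
Qed.

Lemma sum_deltal (T : finType) (F : T -> rat) a :
  \sum_y (y == a)%:R * F y = F a.
Proof. rewrite -[RHS](sum_delta F a); apply: eq_bigr => y _; exact: mulrC. Qed.

Lemma sum_pairE n (F : 'I_n * 'I_n -> nat) :
  (\sum_(s : pairE n) F (val s) = \sum_(i : 'I_n) \sum_(j : 'I_n | (i < j)%N) F (i, j))%N.
Proof.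
rewrite pair_big_dep /=.
rewrite (reindex_omap (val : pairE n -> _) insub); last first.
  by move=> i /= Pi; rewrite insubT.
symmetry; apply: eq_big => -[[i j] h] /=; last by [].
by rewrite h insubT /=; apply/eqP; congr Some; apply: val_inj.
Qed.

Lemma cnt_gt n m : (\sum_(j < n) (m < j) = n - m.+1)%N.
Proof.
rewrite -(big_mkord xpredT (fun j => (m < j) : nat)).
elim: n => [|n IH]; first by rewrite big_nil.
rewrite big_nat_recr //= IH; case: ltnP => /= h; lia.
Qed.

Lemma cnt_lt n p : (\sum_(j < n) (j < p) = minn p n)%N.
Proof.
rewrite -(big_mkord xpredT (fun j => (j < p) : nat)).
elim: n => [|n IH]; first by rewrite big_nil minn0.
rewrite big_nat_recr //= IH; case: (ltnP n p) => h /=; lia.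
Qed.

Lemma sum_eq_le (T : finType) (f g : T -> nat) :
  (forall i, f i <= g i)%N -> (\sum_i f i = \sum_i g i)%N -> forall i, f i = g i.
Proof.
move=> le eqs i.
have h : (\sum_i (g i - f i) == 0)%N by rewrite sumnB // eqs subnn.
move: h; rewrite sum_nat_eq0 => /forallP /(_ i) /=; rewrite subn_eq0 => h.
by apply/eqP; rewrite eqn_leq le h.
Qed.

Lemma det_weight N (A : 'M[rat]_N) (w : 'I_N -> nat) :
  (forall i j, i != j -> A i j != 0 -> (w i < w j)%N) -> \det A = \prod_i A i i.
Proof.
move=> hw; rewrite /determinant (bigD1 (1%g : 'S_N)) //= [X in _ + X]big1 ?addr0.
  by rewrite odd_perm1 expr0 mul1r; apply: eq_bigr => i _; rewrite perm1.
move=> s hs; case: (boolP [forall i, A i (s i) != 0]) => [/forallP hA|].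
  exfalso; move/eqP: hs; apply; apply/permP => i; rewrite perm1.
  have le : forall i, (w i <= w (s i))%N.
    move=> j; case: (eqVneq j (s j)) => [<-//|ne]; exact/ltnW/hw/hA.
  have eqs : (\sum_i w i = \sum_i w (s i))%N.
    by rewrite (reindex_inj (@perm_inj _ s)).
  have := sum_eq_le le eqs i; case: (eqVneq i (s i)) => [e|ne]; first by rewrite -e.
  by move=> e; have := hw _ _ ne (hA i); rewrite e ltnn.
rewrite negb_forall => /existsP [i]; rewrite negbK => /eqP h0.
by rewrite (bigD1 i) //= h0 mul0r mulr0.
Qed.

Definition mx (T : finType) (F : T -> T -> rat) : 'M[rat]_#|T| :=
  \matrix_(i, j) F (enum_val i) (enum_val j).

Definition mulF (T : finType) (F G : T -> T -> rat) x z := \sum_y F x y * G y z.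

Lemma mx_mul (T : finType) (F G : T -> T -> rat) : mx F *m mx G = mx (mulF F G).
Proof.
apply/matrixP => i j; rewrite !mxE /mulF.
rewrite (reindex (fun i : 'I_#|T| => enum_val i)) /=; last first.
  by apply: onW_bij; exact: enum_val_bij.
by apply: eq_bigr => k _; rewrite !mxE.
Qed.

Lemma mx_ext (T : finType) (F G : T -> T -> rat) :
  (forall x y, F x y = G x y) -> mx F = mx G.
Proof. by move=> h; apply/matrixP => i j; rewrite !mxE h. Qed.

Lemma det_mx_weight (T : finType) (F : T -> T -> rat) (w : T -> nat) :
  (forall x y, x != y -> F x y != 0 -> (w x < w y)%N) -> \det (mx F) = \prod_x F x x.
Proof.
move=> hw; rewrite (det_weight (w := fun i => w (enum_val i))).
  rewrite (reindex (fun i : 'I_#|T| => enum_val i)) /=; last by apply: onW_bij; exact: enum_val_bij.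
  by apply: eq_bigr => i _; rewrite mxE.
move=> i j ne; rewrite mxE; apply: hw.
by apply: contra ne => /eqP /enum_val_inj ->.
Qed.

Lemma sum_delta2 (T : finType) (F : T -> rat) a b :
  \sum_y F y * ((y == a)%:R - (y == b)%:R) = F a - F b.
Proof.
under eq_bigr => y _ do rewrite mulrBr.
by rewrite sumrB !sum_delta.
Qed.

Lemma sum_delta4 (T : finType) (F : T -> rat) a b c d :
  \sum_y F y * ((y == a)%:R - (y == b)%:R - (y == c)%:R + (y == d)%:R) =
  F a - F b - F c + F d.
Proof.
under eq_bigr => y _ do rewrite mulrDr !mulrBr.
by rewrite big_split /= !sumrB !sum_delta.
Qed.

Lemma sumn_delta (T : finType) (a : T) (F : T -> nat) :
  (\sum_i (a == i) * F i = F a)%N.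
Proof.
rewrite (bigD1 a) //= eqxx mul1n big1 ?addn0 // => i ne.
by rewrite eq_sym (negbTE ne).
Qed.

Lemma sumn_delta_cond (T : finType) (P : pred T) (a : T) :
  (\sum_(i | P i) (a == i) = P a)%N.
Proof.
rewrite big_mkcond /= (bigD1 a) //= eqxx big1 ?addn0; first by case: (P a).
by move=> i ne; rewrite eq_sym (negbTE ne); case: (P i).
Qed.

Lemma sum1_cond (T : finType) (P : pred T) : (\sum_(i | P i) 1 = \sum_i P i)%N.
Proof. by rewrite big_mkcond /=; apply: eq_bigr => i _; case: (P i). Qed.

Lemma cnt_gt' n (i : 'I_n) : (\sum_(j : 'I_n | i < j) 1 = n - i.+1)%N.
Proof. by rewrite sum1_cond cnt_gt. Qed.

Lemma sum_L1 (T : finType) (G : T -> rat) x a b c :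
  \sum_y ((y == x)%:R - c * ((y == a)%:R + (y == b)%:R)) * G y =
  G x - c * (G a + G b).
Proof.
under eq_bigr => y _ do rewrite mulrBl -mulrA mulrDl.
rewrite sumrB -mulr_sumr big_split /= !sum_deltal //.
Qed.

Lemma sum_L2 (T : finType) (G E : T -> rat) x :
  \sum_y ((y == x)%:R + E y) * G y = G x + \sum_y E y * G y.
Proof.
under eq_bigr => y _ do rewrite mulrDl.
by rewrite big_split /= sum_deltal.
Qed.

Lemma sum_C2 (T : finType) (G E : T -> rat) z :
  \sum_y G y * ((y == z)%:R - E y) = G z - \sum_y G y * E y.
Proof.
under eq_bigr => y _ do rewrite mulrBr.
by rewrite sumrB sum_delta.
Qed.

Lemma det_mx_weight' (T : finType) (F : T -> T -> rat) (w : T -> nat) :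
  (forall x y, x != y -> ~~ (w x < w y)%N -> F x y = 0) -> \det (mx F) = \prod_x F x x.
Proof.
move=> hw; apply: (det_mx_weight (w := w)) => x y ne.
by apply: contraR => h; rewrite hw.
Qed.

Lemma det_mx_unit (T : finType) (F : T -> T -> rat) (w : T -> nat) :
  (forall x y, x != y -> ~~ (w x < w y)%N -> F x y = 0) -> (forall x, F x x = 1) ->
  \det (mx F) = 1.
Proof. by move=> hw h1; rewrite (det_mx_weight' hw) big1. Qed.


Definition eS n (k : 'I_n) : idxE n := Some (inl k).
Definition eP n (s : pairE n) : idxE n := Some (inr s).
Definition p1 n (s : pairE n) : 'I_n := (val s).1.
Definition p2 n (s : pairE n) : 'I_n := (val s).2.
Definition inP n (p : 'I_n) (r : pairE n) : bool := (p == p1 r) || (p == p2 r).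

Lemma pair_eqE n (r s : pairE n) : (r == s) = (p1 r == p1 s) && (p2 r == p2 s).
Proof. by case: r => [[a b] h]; case: s => [[c d] h']. Qed.

Definition Af n (y z : idxE n) : rat :=
  match z with
  | None => (y == None)%:R
  | Some (inl p) => (y == z)%:R - (y == None)%:R
  | Some (inr s) => (y == z)%:R - (y == eS (p1 s))%:R - (y == eS (p2 s))%:R + (y == None)%:R
  end.

Definition Nf n (x z : idxE n) : rat :=
 match x, z with
 | None, None => (5 * (n + 6))%:R
 | None, Some (inl _) => 4
 | None, Some (inr _) => -8
 | Some (inl k), None => 7
 | Some (inl k), Some (inl p) => 28 * (k == p)%:R
 | Some (inl k), Some (inr s) => -32 * (k == p1 s)%:R
 | Some (inr r), None => 5
 | Some (inr r), Some (inl p) => 10 * (inP p r)%:R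
 | Some (inr r), Some (inr s) => -4 * (r == s)%:R - 12 * (inP (p1 s) r)%:R
 end.

Lemma e1 n : ((5 * n + 34)%N%:R : rat) = 5 * n%:R + 34.
Proof. by rewrite natrD natrM. Qed.
Lemma e2 n : ((5 * (n + 6))%N%:R : rat) = 5 * n%:R + 30.
Proof. rewrite natrM natrD; lra. Qed.

Ltac crush := repeat (case: eqP => //= ?; subst); try congruence; try lia; try lra.

Lemma mulMA n x z : mulF (@Mentry n) (@Af n) x z = Nf x z.
Proof.
rewrite /mulF; case: z => [[p|s]|] /=.
- rewrite sum_delta2.
  case: x => [[k|r]|] /=.
  + crush.
  + case: r => [[a b] h]; rewrite /inP /p1 /p2 /=; crush.
  + rewrite ?e1 ?e2; lra.
- rewrite sum_delta4.
  case: x => [[k|r]|]; case: s => [[c d] /= h']; rewrite /= /inP /p1 /p2 ?pair_eqE /=.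
  + crush.
  + case: r => [[a b] /= h]; rewrite /p1 /p2 /=; crush.
  + rewrite ?e1 ?e2; lra.
- rewrite sum_delta; case: x => [[k|r]|] //=.
Qed.


Lemma cnt_first n (p : 'I_n) : (\sum_(s : pairE n) (p == p1 s) = n - p.+1)%N.
Proof.
rewrite /p1 (sum_pairE (fun ij => (p == ij.1) : nat)) /=.
have inner (i : 'I_n) : (\sum_(j : 'I_n | i < j) (p == i) = (p == i) * (n - i.+1))%N.
  by case: (p == i); rewrite ?mul1n ?mul0n ?cnt_gt' // big1.
by rewrite (eq_bigr _ (fun i _ => inner i)) sumn_delta.
Qed.

Lemma cnt_second n (p : 'I_n) : (\sum_(s : pairE n) (p == p2 s) = p)%N.
Proof.
rewrite /p2 (sum_pairE (fun ij => (p == ij.2) : nat)) /=.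
under eq_bigr => i _ do rewrite (sumn_delta_cond (fun j : 'I_n => (i < j)%N)).
rewrite cnt_lt; apply/minn_idPl; exact: ltnW.
Qed.

Lemma cnt_inP n (p : 'I_n) : (\sum_(s : pairE n) inP p s = n.-1)%N.
Proof.
have -> : (\sum_(s : pairE n) inP p s = \sum_s ((p == p1 s) + (p == p2 s)))%N.
  apply: eq_bigr => -[[a b] /= h] _; rewrite /inP /p1 /p2 /=.
  by case: eqP => [->|]; case: eqP => //= e; subst; rewrite ltnn in h.
rewrite big_split /= cnt_first cnt_second; have := ltn_ord p; lia.
Qed.

Lemma cnt_min n (k : 'I_n) : (\sum_(s : pairE n) (p1 s == k) = n - k.+1)%N.
Proof. rewrite -(cnt_first k); apply: eq_bigr => s _; by rewrite eq_sym. Qed.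

Lemma cnt_min_inP n (k p : 'I_n) :
  (\sum_(s : pairE n) (p1 s == k) * inP p s = (k == p) * (n - k.+1) + (k < p))%N.
Proof.
rewrite /inP /p1 /p2 (sum_pairE (fun ij => (ij.1 == k) * ((p == ij.1) || (p == ij.2)))%N) /=.
have inner (i : 'I_n) : (\sum_(j : 'I_n | i < j) (i == k) * ((p == i) || (p == j)) =
   (k == i) * \sum_(j : 'I_n | i < j) ((p == i) || (p == j)))%N.
  by rewrite big_distrr /=; apply: eq_bigr => j _; rewrite eq_sym.
rewrite (eq_bigr _ (fun i _ => inner i)) sumn_delta.
case: (eqVneq p k) => [->|ne]; rewrite ?eqxx /=.
  by rewrite sum1_cond cnt_gt ltnn addn0 mul1n.
rewrite mul0n add0n.
exact: (sumn_delta_cond (fun j : 'I_n => (k < j)%N)).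
Qed.

Lemma card_pairE n : #|{: pairE n}| = (n * (n - 1) %/ 2)%N.
Proof.
rewrite -sum1_card.
rewrite (sum_pairE (fun _ => 1%N)) /=.
rewrite (eq_bigr _ (fun i _ => cnt_gt' i)).
rewrite divn2 subn1 -bin2.
elim: n => [|n IH]; first by rewrite big_ord0.
rewrite big_ord_recl /= subn1 /= binS bin1 -IH addnC; congr (_ + _)%N.
Qed.


Definition L1 n (x y : idxE n) : rat :=
  (y == x)%:R - match x with
                | Some (inr r) => 3 / 8 * ((y == eS (p1 r))%:R + (y == eS (p2 r))%:R)
                | _ => 0 end.

Definition N1f n (x z : idxE n) : rat :=
  match x with
  | Some (inr r) =>
      match z with
      | None => - (1 / 4)
      | Some (inl p) => - (1 / 2) * (inP p r)%:R
      | Some (inr s) => -4 * (r == s)%:R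
      end
  | _ => Nf x z
  end.

Lemma mulL1 n x z : mulF (@L1 n) (@Nf n) x z = N1f x z.
Proof.
rewrite /mulF /L1; case: x => [[k|r]|] /=.
- under eq_bigr => y _ do rewrite subr0. by rewrite sum_deltal.
- rewrite sum_L1; case: z => [[p|s]|] /=.
  + case: r => [[a b] /= h]; rewrite /inP /p1 /p2 /=; crush.
  + case: r => [[a b] /= h]; case: s => [[c d] /= h']; rewrite ?pair_eqE /inP /p1 /p2 /=; crush.
  + lra.
- under eq_bigr => y _ do rewrite subr0. by rewrite sum_deltal.
Qed.

Lemma sum_idx n (F : idxE n -> rat) :
  \sum_y F y = F None + \sum_k F (Some (inl k)) + \sum_s F (Some (inr s)).
Proof. by rewrite sum_opt big_sumType /= addrA. Qed.

Lemma sum_ext n (E G : idxE n -> rat) :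
  E None = 0 -> (forall k, E (Some (inl k)) = 0) ->
  \sum_y E y * G y = \sum_s E (Some (inr s)) * G (Some (inr s)).
Proof.
move=> h0 h1; rewrite sum_idx h0 mul0r add0r big1 ?add0r // => k _.
by rewrite h1 mul0r.
Qed.

Lemma sum_ind (T : finType) (a : T) : \sum_y (y == a)%:R = 1 :> rat.
Proof. rewrite -[RHS](sum_delta (fun _ => 1) a); apply: eq_bigr => y _; by rewrite mul1r. Qed.

Definition ext2 n (x y : idxE n) : rat :=
  match x, y with
  | None, Some (inr _) => -2
  | Some (inl k), Some (inr s) => -8 * (p1 s == k)%:R
  | _, _ => 0
  end.

Definition L2 n (x y : idxE n) : rat := (y == x)%:R + ext2 x y.

Definition N2f n (x z : idxE n) : rat :=
  match x, z with
  | None, None => 5 * n%:R + 30 + #|{: pairE n}|%:R / 2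
  | None, Some (inl _) => 4 + (n.-1)%:R
  | None, Some (inr _) => 0
  | Some (inl k), None => 7 + 2 * (n - k.+1)%:R
  | Some (inl k), Some (inl p) =>
      28 * (k == p)%:R + 4 * ((k == p)%:R * (n - k.+1)%:R + (k < p)%:R)
  | Some (inl k), Some (inr _) => 0
  | Some (inr r), _ => N1f x z
  end.

Lemma mulL2 n x z : mulF (@L2 n) (@N1f n) x z = N2f x z.
Proof.
rewrite /mulF /L2 sum_L2 sum_ext; [|by case: x => [[]|]|by case: x => [[]|]].
case: x => [[k|r]|] /=.
- case: z => [[p|t]|] /=.
  + rewrite (eq_bigr (fun s => 4 * ((p1 s == k) * inP p s)%:R)); last first.
      by move=> s _; rewrite natrM; lra.
    by rewrite -mulr_sumr -natr_sum cnt_min_inP natrD natrM; lra.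
  + rewrite (eq_bigr (fun s => 32 * (p1 s == k)%:R * (s == t)%:R)); last first.
      by move=> s _; lra.
    by rewrite sum_delta eq_sym; lra.
  + rewrite (eq_bigr (fun s => 2 * (p1 s == k)%:R)); last by move=> s _; lra.
    by rewrite -mulr_sumr -natr_sum cnt_min.
- by rewrite big1 ?addr0 // => s _; rewrite mul0r.
- case: z => [[p|t]|] /=.
  + rewrite (eq_bigr (fun s => (inP p s)%:R)); last by move=> s _; lra.
    by rewrite -natr_sum cnt_inP.
  + rewrite (eq_bigr (fun s => 8 * (s == t)%:R)); last by move=> s _; lra.
    by rewrite -mulr_sumr sum_ind; lra.
  + rewrite sumr_const -mulr_natr e2; lra.
Qed.

Lemma det_Af n : \det (mx (@Af n)) = 1.
Proof.
apply: (det_mx_unit (w := fun y : idxE n => match y with None => 0%N | Some (inl _) => 1%N | Some (inr _) => 2%N end)).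
  move=> y z ne; rewrite /Af (negbTE ne).
  case: z ne => [[p|s]|]; case: y => [[k|r]|] //= ne _.
by move=> [[k|r]|]; rewrite /Af eqxx //= ?subr0 //; lra.
Qed.

Lemma det_L1 n : \det (mx (@L1 n)) = 1.
Proof.
apply: (det_mx_unit (w := fun y : idxE n => match y with None => 0%N | Some (inl _) => 1%N | Some (inr _) => 0%N end)).
  move=> y z ne; rewrite /L1 eq_sym (negbTE ne).
  case: z ne => [[p|s]|]; case: y => [[k|r]|] //= ne _; lra.
by move=> [[k|r]|]; rewrite /L1 eqxx //= ?subr0 //; lra.
Qed.

Lemma det_L2 n : \det (mx (@L2 n)) = 1.
Proof.
apply: (det_mx_unit (w := fun y : idxE n => match y with None => 0%N | Some (inl _) => 0%N | Some (inr _) => 1%N end)).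
  move=> y z ne; rewrite /L2 eq_sym (negbTE ne).
  case: z ne => [[p|s]|]; case: y => [[k|r]|] //= ne _; lra.
by move=> [[k|r]|]; rewrite /L2 eqxx //= ?addr0 //; lra.
Qed.

Definition E2 n (z y : idxE n) : rat :=
  match z, y with None, Some (inl _) => 1 / 4 | _, _ => 0 end.
Definition C2 n (y z : idxE n) : rat := (y == z)%:R - E2 z y.

Lemma det_C2 n : \det (mx (@C2 n)) = 1.
Proof.
apply: (det_mx_unit (w := fun y : idxE n => match y with None => 1%N | Some (inl _) => 0%N | Some (inr _) => 0%N end)).
  move=> y z ne; rewrite /C2 (negbTE ne).
  case: z ne => [[p|s]|]; case: y => [[k|r]|] //= ne _; lra.
by move=> [[k|r]|]; rewrite /C2 eqxx //= ?subr0 //; lra.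
Qed.


Definition Tf n := mulF (@N2f n) (@C2 n).

Lemma T_some n (x z : idxE n) : z != None -> Tf x z = N2f x z.
Proof.
move=> hz; rewrite /Tf /mulF /C2 sum_C2 big1 ?subr0 // => y _.
by case: z hz => [[]|] //= _ _; rewrite mulr0.
Qed.

Lemma T_none n (x : idxE n) :
  Tf x None = N2f x None - 1 / 4 * \sum_k N2f x (Some (inl k)).
Proof.
have h0 : \sum_(s : pairE n) N2f x (Some (inr s)) * 0 = 0 by rewrite big1 // => s _; rewrite mulr0.
rewrite /Tf /mulF /C2 sum_C2 sum_idx /= mulr0 add0r h0 addr0.
by rewrite mulr_sumr; congr (_ - _); apply: eq_bigr => k _; rewrite mulrC.
Qed.

Lemma sum_eqk n (k : 'I_n) : \sum_(p : 'I_n) (k == p)%:R = 1 :> rat.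
Proof. rewrite -[RHS](sum_ind k); apply: eq_bigr => p _; by rewrite eq_sym. Qed.

Lemma T_k0 n (k : 'I_n) : Tf (Some (inl k)) None = 0.
Proof.
rewrite T_none /=.
rewrite (eq_bigr (fun p => (28 + 4 * (n - k.+1)%:R) * (k == p)%:R + 4 * (k < p)%:R)); last first.
  by move=> p _; lra.
rewrite big_split /= -!mulr_sumr sum_eqk -natr_sum cnt_gt; lra.
Qed.

Lemma m2 n : ((n * (n - 1) %/ 2) * 2 = n * n.-1)%N.
Proof.
rewrite subn1 divn2 muln2 halfK.
by case: n => // n; rewrite oddM /= andNb subn0.
Qed.

Lemma prod_idx n (F : idxE n -> rat) :
  \prod_y F y = F None * (\prod_k F (Some (inl k)) * \prod_s F (Some (inr s))).
Proof. by rewrite prod_opt big_sumType. Qed.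

Lemma det_T n : \det (mx (@Tf n)) =
  2 * (2 * n%:R + 15) * \prod_(k : 'I_n) (28 + 4 * (n - k.+1)%:R) * (-4) ^+ #|{: pairE n}|.
Proof.
rewrite (det_mx_weight' (w := fun y : idxE n => match y with None => 1%N | Some (inl k) => k.+2 | Some (inr _) => 0%N end)).
  rewrite prod_idx [X in _ * (_ * X)](eq_bigr (fun _ => -4)); last first.
    by move=> s _; rewrite T_some //= eqxx mulr1.
  rewrite prodr_const card_pairE mulrA; congr (_ * _ * _).
  - rewrite T_none /= sumr_const card_ord -[_ *+ n]mulr_natr card_pairE.
    have := m2 n; move/(congr1 (fun m => m%:R : rat)); rewrite !natrM => h.
    nra.
  - apply: eq_bigr => k _; rewrite T_some //= eqxx ltnn mulr1 mul1r addr0 //.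
move=> x y ne hw; case: y ne hw => [y|] ne hw.
  rewrite T_some //; case: y ne hw => [p|t]; case: x => [[k|r]|] //= ne hw.
  - have nkp : k != p by apply: contra ne => /eqP ->.
    have hkp : (k < p)%N = false by apply/negbTE; move: hw; rewrite !ltnS.
    by rewrite (negbTE nkp) hkp !mulr0 mul0r !addr0.
  - have nrt : r != t by apply: contra ne => /eqP ->.
    by rewrite (negbTE nrt) mulr0.
case: x ne hw => [[k|r]|] //= ne hw; exact: T_k0.
Qed.

Lemma prodfact n : (6`! * \prod_(k < n) (n + 6 - k) = (n + 6)`!)%N.
Proof.
elim: n => [|n IH]; first by rewrite big_ord0 muln1.
rewrite big_ord_recl /= subn0 mulnCA.
have -> : (\prod_(i < n) (n.+1 + 6 - bump 0 i) = \prod_(k < n) (n + 6 - k))%N.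
  by apply: eq_bigr => i _; rewrite /bump /= add1n addSn subSS.
by rewrite IH addSn factS.
Qed.

Lemma det_M n : \det (Mhat n) = \det (mx (@Tf n)).
Proof.
have -> : Mhat n = mx (@Mentry n) by [].
rewrite /Tf -mx_mul -(mx_ext (@mulL2 n)) -mx_mul -(mx_ext (@mulL1 n)) -mx_mul.
rewrite -(mx_ext (@mulMA n)) -mx_mul !det_mulmx det_Af det_L1 det_L2 det_C2.
by rewrite !mul1r !mulr1.
Qed.

Unset Implicit Arguments.

Theorem mainTheorem12 (n : nat) (hn : (1 <= n)%N) :
  \det (Mhat n) =
    (-1) ^+ (n * (n - 1) %/ 2) * 2 ^+ (n ^ 2 + n + 1) * (2 * n + 15)%:R
      * ((n + 6)`!)%:R / (6`!)%:R
  /\ \det (Mhat n) != 0.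
Proof.
have Hdet : \det (Mhat n) =
    (-1) ^+ (n * (n - 1) %/ 2) * 2 ^+ (n ^ 2 + n + 1) * (2 * n + 15)%:R
      * ((n + 6)`!)%:R / (6`!)%:R.
  rewrite det_M det_T card_pairE.
  set m := (n * (n - 1) %/ 2)%N.
  have hP : \prod_(k < n) (28 + 4 * (n - k.+1)%:R) = 4 ^+ n * (\prod_(k < n) (n + 6 - k))%:R :> rat.
    rewrite natr_prod -[in X in X * _](card_ord n) -prodr_const -big_split /=.
    apply: eq_bigr => k _; have := ltn_ord k => hk.
    have -> : (n + 6 - k = 7 + (n - k.+1))%N by lia.
    by rewrite natrD; lra.
  rewrite hP -prodfact.
  have e : (n ^ 2 + n + 1 = 1 + 2 * n + 2 * m)%N.
    have := m2 n; rewrite -/m => hm; rewrite [(2 * m)%N]mulnC hm.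
    case: (n) hn => // k _ /=; rewrite expnS expn1; nia.
  have h24 : (2 : rat) ^+ 2 = 4 by rewrite expr2; lra.
  have h4 k : (4 : rat) ^+ k = 2 ^+ k * 2 ^+ k.
    by rewrite -exprD addnn -mul2n exprM h24.
  rewrite (_ : (-4 : rat) = -1 * 4) ?exprMn; last by lra.
  rewrite !h4 e !exprD expr0 expr1.
  rewrite natrM natrD natrM.
  have h6 : (6`!)%:R != 0 :> rat by rewrite pnatr_eq0.
  set f := (6`!)%:R in h6 *.
  set a := (2 : rat) ^+ n.
  set b := (2 : rat) ^+ m.
  set c := (-1 : rat) ^+ m.
  set P := (\prod_(k < n) (n + 6 - k))%:R.
  set x := (n%:R : rat).
  clearbody f a b c P x.
  by field.
split; first exact: Hdet.
rewrite Hdet.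
apply: mulf_neq0; last by rewrite invr_eq0 pnatr_eq0 -lt0n fact_gt0.
apply: mulf_neq0; last by rewrite pnatr_eq0 -lt0n fact_gt0.
apply: mulf_neq0; last by rewrite pnatr_eq0 addn_eq0 andbF.
apply: mulf_neq0; apply: expf_neq0; first by rewrite oppr_eq0 oner_eq0.
by rewrite pnatr_eq0.
Qed.
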